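(* Let $(X,G)$ and $(Y,H)$ be free odometers with $G=H=\mathbb Z^d$. Let $\varphi:Y\to X$ be a homeomorphism implementing a continuous orbit equivalence between $(Y,H)$ and $(X,G)$, and let $f:H\times Y\to G$ be the corresponding orbit cocycle. Then there exist finite-index subgroups $G_0\subseteq G$ and $H_0\subseteq H$ with $[G:G_0]=[H:H_0]$, a clopen partition $\{C_0,\dots,C_{q-1}\}$ of $Y$ into $H_0$-invariant sets, and group isomorphisms $\theta_i:H_0\to G_0$, $i=0,\dots,q-1$, such that $f(h,y)=\theta_i(h)$ for every $h\in H_0$, $y\in C_i$ and $i=0,\dots,q-1$.
   Context: $G$-odometer: for a decreasing sequence $G_0\supseteq G_1\supseteq\cdots$ of finite-index subgroups of $G$, the inverse limit $\varprojlim(G/G_n,\pi_n)$ of coset spaces under the natural maps $\pi_n:G/G_n\to G/G_{n-1}$, with $G$ acting by translation coordinatewise. Free: $g\cdot x=x$ implies $g=e$. Continuous orbit equivalence: a homeomorphism $\varphi:Y\to X$ mapping $H$-orbits bijectively onto $G$-orbits, such that locally each group element of one group is conjugated by $\varphi$ to an element of the other on a clopen neighborhood (in both directions). Orbit cocycle: the map $f:H\times Y\to G$ defined by $f(h,y)\cdot\varphi(y)=\varphi(h\cdot y)$ (well defined by freeness). *)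

(* Defs.v *)
From HB Require Import structures.
From mathcomp Require Import all_boot all_order all_algebra.
Set Implicit Arguments. Unset Strict Implicit. Unset Printing Implicit Defensive.
Import Order.TTheory GRing.Theory Num.Theory.
Local Open Scope ring_scope.

Definition Zd (d : nat) := 'rV[int]_d.

Definition is_subgroup d (S : Zd d -> Prop) : Prop :=
  S 0 /\ (forall a b, S a -> S b -> S (a - b)).

Definition has_index d (S : Zd d -> Prop) (n : nat) : Prop :=
  exists r : 'I_n -> Zd d,
    (forall i j, S (r i - r j) -> i = j) /\ (forall g, exists i, S (g - r i)).

Definition finite_index d (S : Zd d -> Prop) : Prop := exists n, has_index S n.

Definition odo_seq d (Gs : nat -> Zd d -> Prop) : Prop :=
  (forall n, is_subgroup (Gs n) /\ finite_index (Gs n)) /\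
  (forall n g, Gs n.+1 g -> Gs n g).

Definition is_coset d (S : Zd d -> Prop) (C : Zd d -> Prop) : Prop :=
  exists g, forall z, C z <-> S (z - g).

(* Points of the inverse limit: compatible sequences of cosets
   (x_{n+1} is a coset of G_{n+1} contained in the coset x_n of G_n,
   i.e. pi_{n+1}(x_{n+1}) = x_n). *)
Definition is_point d (Gs : nat -> Zd d -> Prop) (x : nat -> Zd d -> Prop) : Prop :=
  (forall n, is_coset (Gs n) (x n)) /\ (forall n z, x n.+1 z -> x n z).

Definition odo d (Gs : nat -> Zd d -> Prop) := {x : nat -> Zd d -> Prop | is_point Gs x}.

Definition act_fun d (g : Zd d) (x : nat -> Zd d -> Prop) : nat -> Zd d -> Prop :=
  fun n z => x n (z - g).

Lemma act_fun_point d (Gs : nat -> Zd d -> Prop) g x :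
  is_point Gs x -> is_point Gs (act_fun g x).
Proof.
move=> [Hc Hs]; split; last by move=> n z; apply: Hs.
move=> n; have [g0 Hg0] := Hc n; exists (g + g0) => z.
rewrite /act_fun; have -> : z - (g + g0) = z - g - g0 by rewrite opprD addrA.
exact: Hg0.
Qed.

Definition act d (Gs : nat -> Zd d -> Prop) (g : Zd d) (x : odo Gs) : odo Gs :=
  exist _ (act_fun g (proj1_sig x)) (act_fun_point g (proj2_sig x)).

Definition free_action d (Gs : nat -> Zd d -> Prop) : Prop :=
  forall (g : Zd d) (x : odo Gs), act g x = x -> g = 0.

(* Inverse-limit topology: U is open iff around each of its points it
   contains a cylinder set {y | y_n = x_n}. *)
Definition is_open d (Gs : nat -> Zd d -> Prop) (U : odo Gs -> Prop) : Prop :=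
  forall x, U x -> exists n, forall y,
    (forall z, proj1_sig y n z <-> proj1_sig x n z) -> U y.

Definition is_clopen d (Gs : nat -> Zd d -> Prop) (U : odo Gs -> Prop) : Prop :=
  is_open U /\ is_open (fun x => ~ U x).

Definition continuous d (Gs Hs : nat -> Zd d -> Prop) (F : odo Hs -> odo Gs) : Prop :=
  forall U, is_open U -> is_open (fun y => U (F y)).

(* Continuous orbit equivalence implemented by phi : Y -> X,
   (Y,H) with H-odometer sequence Hs, (X,G) with sequence Gs. *)
Definition cont_orbit_equiv d (Gs Hs : nat -> Zd d -> Prop) (phi : odo Hs -> odo Gs) : Prop :=
  exists psi : odo Gs -> odo Hs,
    [/\ cancel phi psi, cancel psi phi, continuous phi & continuous psi] /\
    [/\
      (forall y x, (exists g, x = act g (phi y)) <-> (exists h, x = phi (act h y))),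
      (forall (h : Zd d) y, exists U, [/\ is_clopen U, U y &
          (exists g : Zd d, forall z, U z -> phi (act h z) = act g (phi z))]) &
      (forall (g : Zd d) x, exists V, [/\ is_clopen V, V x &
          (exists h : Zd d, forall w, V w -> psi (act g w) = act h (psi w))])].

Definition group_iso_on d (H0 G0 : Zd d -> Prop) (theta : Zd d -> Zd d) : Prop :=
  [/\ (forall a b, H0 a -> H0 b -> theta (a + b) = theta a + theta b),
      (forall a, H0 a -> G0 (theta a)),
      (forall a b, H0 a -> H0 b -> theta a = theta b -> a = b) &
      (forall c, G0 c -> exists2 a, H0 a & theta a = c)].

(* Main.v *)
Require Import Defs.
From HB Require Import structures.
From mathcomp Require Import all_boot all_order all_algebra.
From Stdlib Require ClassicalEpsilon FunctionalExtensionality PropExtensionality ProofIrrelevance Classical_Prop.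
Import GRing.Theory.
Local Open Scope ring_scope.
Set Implicit Arguments.

Lemma odo_ext d (Hs : nat -> Zd d -> Prop) (x y : odo Hs) :
  (forall n z, proj1_sig x n z <-> proj1_sig y n z) -> x = y.
Proof.
case: x => x px; case: y => y py /= E.
have ? : x = y.
  apply: FunctionalExtensionality.functional_extensionality => n.
  apply: FunctionalExtensionality.functional_extensionality => z.
  apply: PropExtensionality.propositional_extensionality; exact: E.
subst y; congr exist; exact: ProofIrrelevance.proof_irrelevance.
Qed.

Lemma act_comp d (Hs : nat -> Zd d -> Prop) (a b : Zd d) (x : odo Hs) :
  act a (act b x) = act (a + b) x.
Proof. by apply: odo_ext => n z /=; rewrite /act_fun opprD addrA. Qed.

Lemma act0 d (Hs : nat -> Zd d -> Prop) (x : odo Hs) : act 0 x = x.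
Proof. by apply: odo_ext => n z /=; rewrite /act_fun subr0. Qed.

Lemma act_cancel d (Hs : nat -> Zd d -> Prop) (fr : free_action Hs) (a b : Zd d) (x : odo Hs) :
  act a x = act b x -> a = b.
Proof.
move=> E; apply/eqP; rewrite -subr_eq0; apply/eqP; apply: (fr _ x).
have := congr1 (@act d Hs (-b)) E; rewrite !act_comp addNr act0.
by rewrite addrC.
Qed.

Lemma sub_opp d (S : Zd d -> Prop) : is_subgroup S -> forall a, S a -> S (- a).
Proof. by case=> S0 SB a Sa; have := SB _ _ S0 Sa; rewrite sub0r. Qed.

Lemma sub_add d (S : Zd d -> Prop) : is_subgroup S -> forall a b, S a -> S b -> S (a + b).
Proof.
move=> hS a b Sa Sb; have := (proj2 hS) _ _ Sa (sub_opp hS _ Sb); by rewrite opprK.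
Qed.

Lemma coset_shift d (S : Zd d -> Prop) (C : Zd d -> Prop) c :
  is_subgroup S -> is_coset S C -> C c -> forall z, C z <-> S (z - c).
Proof.
move=> hS [g Hg] Cc z; have Scg := (Hg c).1 Cc; rewrite Hg; split=> H.
  by have := (proj2 hS) _ _ H Scg; rewrite opprB addrA subrK.
by have := sub_add hS _ _ H Scg; rewrite addrA subrK.
Qed.

Definition cyl d (Hs : nat -> Zd d -> Prop) n (y y' : odo Hs) :=
  forall z, proj1_sig y n z <-> proj1_sig y' n z.

Lemma coset_pt d (Hs : nat -> Zd d -> Prop) (hHs : odo_seq Hs) (y : odo Hs) n :
  exists g, proj1_sig y n g.
Proof.
have [g Hg] := (proj2_sig y).1 n; exists g; apply/Hg; rewrite subrr.
exact: (proj1 (proj1 hHs n)).1.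
Qed.

Lemma cyl_mono d (Hs : nat -> Zd d -> Prop) (hHs : odo_seq Hs) n M (y y' : odo Hs) :
  (n <= M)%N -> cyl M y y' -> cyl n y y'.
Proof.
move=> nM E.
have sub : forall (w : odo Hs) z, proj1_sig w M z -> proj1_sig w n z.
  move=> w z; elim: M nM {E} => [|M IH]; first by rewrite leqn0 => /eqP ->.
  rewrite leq_eqVlt => /orP [/eqP -> //|]; rewrite ltnS => nM wz.
  by apply: IH nM _; apply: (proj2_sig w).2.
have [g yg] := coset_pt hHs y M.
have y'g := (E g).1 yg.
have hS := proj1 (proj1 hHs n).
move=> z; rewrite (coset_shift _ hS ((proj2_sig y).1 n) (sub _ _ yg)).
by rewrite (coset_shift _ hS ((proj2_sig y').1 n) (sub _ _ y'g)).
Qed.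

Definition Inf d (Hs : nat -> Zd d -> Prop) (good : nat -> odo Hs -> Prop) (R : odo Hs -> Prop) :=
  forall M, exists y, R y /\ ~ good M y.

Fixpoint Rseq d (Hs : nat -> Zd d -> Prop) (code : nat -> odo Hs -> nat)
  (good : nat -> odo Hs -> Prop) (n : nat) : odo Hs -> Prop :=
  match n with
  | 0 => fun _ => True
  | n'.+1 => fun y => Rseq code good n' y /\ code n' y =
      ClassicalEpsilon.epsilon (inhabits 0%N)
        (fun c => Inf good (fun y => Rseq code good n' y /\ code n' y = c))
  end.


Lemma compact d (Hs : nat -> Zd d -> Prop) (code : nat -> odo Hs -> nat) (B : nat -> nat)
  (good : nat -> odo Hs -> Prop) :
  (forall n y, code n y < B n)%N ->
  (forall n y y', code n y = code n y' -> cyl n y y') ->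
  (forall n M y, (n <= M)%N -> good n y -> good M y) ->
  (forall n y y', cyl n y y' -> good n y -> good n y') ->
  (forall y, exists n, good n y) ->
  exists N, forall y, good N y.
Proof.
move=> hB hc hmono hcyl hloc.
apply: Classical_Prop.NNPP => H.
have H0 : Inf good (fun _ => True).
  move=> M; apply: Classical_Prop.NNPP => H1; apply: H; exists M => y.
  apply: Classical_Prop.NNPP => H2; apply: H1; by exists y.
have step : forall R k, Inf good R -> exists c, Inf good (fun y => R y /\ code k y = c).
  move=> R k hR; apply: Classical_Prop.NNPP => H1.
  have H2 : forall c, exists M, forall y, R y -> code k y = c -> good M y.
    move=> c; apply: Classical_Prop.NNPP => H3; apply: H1; exists c => M.
    apply: Classical_Prop.NNPP => H4; apply: H3; exists M => y Ry cy.
    apply: Classical_Prop.NNPP => H5; apply: H4; by exists y.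
  pose Mf c := proj1_sig (ClassicalEpsilon.constructive_indefinite_description _ (H2 c)).
  pose M := (\max_(c < B k) Mf c)%N.
  have [y [Ry ng]] := hR M.
  apply: ng; apply: (hmono (Mf (code k y))).
    exact: (@leq_bigmax _ (fun c : 'I_(B k) => Mf c) (Ordinal (hB k y))).
  exact: (proj2_sig (ClassicalEpsilon.constructive_indefinite_description _ (H2 (code k y)))) y Ry erefl.
have Rinf : forall n, Inf good (Rseq code good n).
  elim=> [|n IH] //=.
  apply: (ClassicalEpsilon.epsilon_spec (inhabits 0%N)
     (fun c => Inf good (fun y => Rseq code good n y /\ code n y = c))).
  exact: step.
have Rcyl : forall n y y', Rseq code good n.+1 y -> Rseq code good n.+1 y' -> cyl n y y'.
  move=> n y y' [_ e] [_ e']; apply: hc; by rewrite e e'.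
pose ys n z := exists y, Rseq code good n.+1 y /\ proj1_sig y n z.
have ysE : forall n y, Rseq code good n.+1 y -> forall z, ys n z <-> proj1_sig y n z.
  move=> n y Ry z; split; first by move=> [y' [Ry' yz]]; apply/(Rcyl _ _ _ Ry' Ry).
  by move=> yz; exists y.
have pt : is_point Hs ys.
  split.
    move=> n; have [y [Ry _]] := Rinf n.+1 0%N.
    have [g Hg] := proj1 (proj2_sig y) n; exists g => z; rewrite -Hg; exact: ysE.
  move=> n z [y [Ry yz]]; exists y; split; first exact: (proj1 Ry).
  exact: (proj2 (proj2_sig y)).
pose yst : odo Hs := exist _ ys pt.
have [n gn] := hloc yst.
have [y [Ry ng]] := Rinf n.+1 n.
apply: ng; apply: (hcyl n yst) gn => z; exact: ysE.
Qed.

Lemma codes_exist d (Hs : nat -> Zd d -> Prop) (hHs : odo_seq Hs) :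
  exists (code : nat -> odo Hs -> nat) (B : nat -> nat),
    (forall n y, code n y < B n)%N /\ (forall n y y', code n y = code n y' -> cyl n y y').
Proof.
pose mr n := ClassicalEpsilon.constructive_indefinite_description _ (proj2 (proj1 hHs n)).
pose m n := proj1_sig (mr n).
pose rr n := ClassicalEpsilon.constructive_indefinite_description _ (proj2_sig (mr n)).
pose r n := proj1_sig (rr n).
pose P n (y : odo Hs) (i : nat) := exists hi : (i < m n)%N, proj1_sig y n (r n (Ordinal hi)).
have ex : forall n y, exists i, P n y i.
  move=> n y; have [g Hg] := proj1 (proj2_sig y) n.
  have [_ cov] := proj2_sig (rr n).
  have [i Si] := cov g.
  exists i, (ltn_ord i).
  have -> : Ordinal (ltn_ord i) = i by apply: val_inj.
  apply/Hg.
  have := sub_opp (proj1 (proj1 hHs n)) _ Si; by rewrite opprB.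
pose code n y := ClassicalEpsilon.epsilon (inhabits 0%N) (P n y).
have cP : forall n y, P n y (code n y).
  move=> n y; exact: ClassicalEpsilon.epsilon_spec (ex n y).
exists code, m; split.
  by move=> n y; have [hi _] := cP n y.
move=> n y y' e.
have [hi yc] := cP n y; have [hi' yc'] := cP n y'.
move: hi' yc'; rewrite -e => hi' yc'.
have E : Ordinal hi = Ordinal hi' by apply: val_inj.
rewrite E in yc.
have hS := proj1 (proj1 hHs n).
move=> z; rewrite (coset_shift _ hS (proj1 (proj2_sig y) n) yc).
by rewrite (coset_shift _ hS (proj1 (proj2_sig y') n) yc').
Qed.

Unset Implicit Arguments.

Theorem theorem3p4 (d : nat) (Gs Hs : nat -> Zd d -> Prop)
  (hGs : odo_seq Gs) (hHs : odo_seq Hs)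
  (freeX : free_action Gs) (freeY : free_action Hs)
  (phi : odo Hs -> odo Gs) (hphi : cont_orbit_equiv phi)
  (f : Zd d -> odo Hs -> Zd d)
  (hf : forall (h : Zd d) (y : odo Hs), act (f h y) (phi y) = phi (act h y)) :
  exists (G0 H0 : Zd d -> Prop) (n : nat),
    [/\ is_subgroup G0, is_subgroup H0, has_index G0 n, has_index H0 n &
    (exists (q : nat) (C : 'I_q -> odo Hs -> Prop) (theta : 'I_q -> Zd d -> Zd d),
      [/\ (forall i, is_clopen (C i)),
          (forall i, exists y, C i y),
          (forall i j y, C i y -> C j y -> i = j),
          (forall y, exists i, C i y) &
          (forall i h y, H0 h -> C i y -> C i (act h y))] /\
      [/\
          (forall i, group_iso_on H0 G0 (theta i)) &
          (forall i h y, H0 h -> C i y -> f h y = theta i h)])].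
Proof.
have [psi [[phiK psiK _ _] [horb hloc _]]] := hphi.
have phi_inj : injective phi := can_inj phiK.
have f_eq : forall a y g, act g (phi y) = phi (act a y) -> f a y = g.
  move=> a y g E; apply: (@act_cancel _ _ freeX _ _ (phi y)); by rewrite hf E.
have f0 : forall y, f 0 y = 0 by move=> y; apply: f_eq; rewrite !act0.
have fco : forall a b y, f (a + b) y = f a (act b y) + f b y.
  move=> a b y; apply: f_eq; by rewrite -(act_comp a b y) -hf -hf act_comp.
have finj : forall a b y, f a y = f b y -> a = b.
  move=> a b y E; apply: (@act_cancel _ _ freeY _ _ y); apply: phi_inj; by rewrite -!hf E.
pose e (k : 'I_d) : Zd d := delta_mx 0 k.
pose good n (y : odo Hs) := forall k, forall z, cyl n y z -> f (e k) z = f (e k) y.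
have loc1 : forall h y, exists n, forall z, cyl n y z -> f h z = f h y.
  move=> h y; have [U [clU Uy [g Hg]]] := hloc h y.
  have [n Hn] := proj1 clU y Uy.
  exists n => z yz.
  have Uz : U z by apply: Hn => w; exact: iff_sym (yz w).
  by rewrite (f_eq h z g (esym (Hg z Uz))) (f_eq h y g (esym (Hg y Uy))).
have hgood : forall y, exists n, good n y.
  move=> y.
  pose nk k := proj1_sig (ClassicalEpsilon.constructive_indefinite_description _ (loc1 (e k) y)).
  exists (\max_k nk k)%N => k z yz.
  apply: (proj2_sig (ClassicalEpsilon.constructive_indefinite_description _ (loc1 (e k) y))).
  apply: (cyl_mono hHs _ _ yz); exact: (@leq_bigmax _ nk k).
have hmono : forall n M y, (n <= M)%N -> good n y -> good M y.
  move=> n M y nM gy k z yz; apply: gy; exact: (cyl_mono hHs _ nM yz).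
have hcyl : forall n y y', cyl n y y' -> good n y -> good n y'.
  move=> n y y' yy' gy k z y'z.
  rewrite (gy k z (fun w => iff_trans (yy' w) (y'z w))).
  by rewrite (gy k y' yy').
have [code [B [hB hc]]] := codes_exist hHs.
have [N hN] := @compact _ _ code B good hB hc hmono hcyl hgood.
have cyl_act : forall n b (y y' : odo Hs), cyl n y y' -> cyl n (act b y) (act b y').
  by move=> n b y y' E z /=; rewrite /act_fun; exact: E.
pose P a := forall y y', cyl N y y' -> f a y = f a y'.
have P0 : P 0 by move=> y y' _; rewrite !f0.
have PD : forall a b, P a -> P b -> P (a + b).
  move=> a b Pa Pb y y' E; by rewrite !fco (Pa _ _ (cyl_act _ b _ _ E)) (Pb _ _ E).
have PN : forall a, P a -> P (- a).
  move=> a Pa y y' E.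
  have H z : f (- a) z = - f a (act (- a) z).
    have := fco a (-a) z; rewrite subrr f0 => /eqP.
    by rewrite eq_sym addrC addr_eq0 => /eqP.
  by rewrite !H (Pa _ _ (cyl_act _ _ _ _ E)).
have Pn : forall v n, P v -> P (v *+ n).
  move=> v n Pv; elim: n => [|n IH]; first by rewrite mulr0n.
  by rewrite mulrS; apply: PD.
have Pz : forall v (z : int), P v -> P (v *~ z).
  move=> v [n|n] Pv; first by rewrite -pmulrn; apply: Pn.
  by rewrite NegzE mulrNz -pmulrn; apply: PN; apply: Pn.
have Pe : forall k, P (e k).
  move=> k y y' E; exact: esym (hN y k y' E).
have Pall : forall a, P a.
  move=> a; rewrite (row_sum_delta a); apply: (big_ind P) => //.
  move=> k _; rewrite -[a 0 k]intz scaler_int; exact: Pz.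
have SN := proj1 (proj1 hHs N).
have cyl_H : forall (h : Zd d) (y : odo Hs), Hs N h -> cyl N (act h y) y.
  move=> h y Hh z /=; rewrite /act_fun.
  have [g Hg] := proj1 (proj2_sig y) N.
  rewrite !Hg; split => H.
    by have := sub_add SN _ _ H Hh; rewrite addrAC subrK.
  by have := proj2 SN _ _ H Hh; rewrite addrAC.
have fcomm : forall (h a : Zd d) (y : odo Hs), Hs N h -> f h (act a y) = f h y.
  move=> h a y Hh.
  have E := fco h a y; rewrite addrC fco (Pall a _ _ (cyl_H h y Hh)) addrC in E.
  apply: (addIr (f a y)); by rewrite E.
have fglob : forall (h : Zd d) (y y' : odo Hs), Hs N h -> f h y' = f h y.
  move=> h y y' Hh.
  have [g Hg] := proj1 (proj2_sig y) N; have [g' Hg'] := proj1 (proj2_sig y') N.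
  have E : cyl N y' (act (g' - g) y).
    move=> z /=; rewrite /act_fun Hg Hg'.
    by rewrite opprB addrA addrAC addrK.
  by rewrite (Pall h _ _ E) fcomm.
have pt0 : is_point Hs (fun n => Hs n).
  split; last exact: (proj2 hHs).
  by move=> n; exists 0 => z; rewrite subr0.
pose y0 : odo Hs := exist _ (fun n => Hs n) pt0.
have tadd : forall a b, Hs N a -> f (a + b) y0 = f a y0 + f b y0.
  by move=> a b Ha; rewrite fco fcomm.
have tsub : forall a b, Hs N a -> Hs N b -> f a y0 - f b y0 = f (a - b) y0.
  move=> a b Ha Hb; have := tadd (a - b) b (proj2 SN _ _ Ha Hb).
  by rewrite subrK => ->; rewrite addrK.
have [m [r [rdist rcov]]] := proj2 (proj1 hHs N).
exists (fun g => exists h, Hs N h /\ f h y0 = g), (Hs N), m.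
split.
- split; first by exists 0; split; [exact: proj1 SN | exact: f0].
  move=> _ _ [a [Ha <-]] [b [Hb <-]]; exists (a - b); split.
    exact: (proj2 SN _ _ Ha Hb).
  by rewrite tsub.
- exact: SN.
- exists (fun i => f (r i) y0); split.
    move=> i j [s [Hs' E]]; apply: rdist.
    have -> : r i = s + r j.
      apply: (finj _ _ y0); by rewrite fco fcomm // E subrK.
    by rewrite addrK.
  move=> g.
  have [h Eh] := (horb y0 (act g (phi y0))).1 (ex_intro _ g erefl).
  have gE : f h y0 = g := f_eq h y0 g Eh.
  have [i Hi] := rcov h.
  exists i, (h - r i); split => //.
  rewrite -gE; have := fco (h - r i) (r i) y0; rewrite subrK fcomm // => ->.
  by rewrite addrK.
- by exists r; split.
- exists 1%N, (fun _ _ => True), (fun _ h => f h y0); split; split.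
  + by move=> i; split; [move=> x _; exists 0%N | move=> x H; case: H].
  + by move=> i; exists y0.
  + by move=> i j y _ _; rewrite (ord1 i) (ord1 j).
  + by move=> y; exists ord0.
  + by [].
  + move=> i; split.
    * by move=> a b Ha Hb; exact: tadd.
    * by move=> a Ha; exists a; split.
    * by move=> a b _ _ E; exact: finj E.
    * by move=> c [a [Ha <-]]; exists a.
  + by move=> i h y Hh _; exact: fglob.
Qed.
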